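(* Let $G=(V,E)\in\Theta$. If $|V|\ge 3$, then the minimum degree of $G$ is $4$; and if $|V|\ge 4$, then $\Gamma(G)$ contains two non-adjacent vertices.
   Context: Graphs are finite, undirected, possibly with parallel edges. Let $Z_3$ be the graph with two vertices and three parallel edges between them. For a graph $G$ and an edge $e$ with ends $u_1,u_2$, $G(e)$ is obtained from $G-e$ by adding a new vertex $w$, two parallel edges joining $w$ and $u_1$, and two parallel edges joining $w$ and $u_2$. $\Theta$ is the smallest set of graphs containing $Z_3$ and containing $G(e)$ for every $G\in\Theta$ and every $e\in E(G)$. For a vertex $x$, $d(x)$ is its degree and $N(x)=\{u: xu\in E(G)\}$; $\Gamma(G)$ is the set of vertices $x$ with $d(x)=4$ and $|N(x)|=2$. *)

(* Defs.v *)
From mathcomp Require Import all_boot.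
Set Implicit Arguments. Unset Strict Implicit. Unset Printing Implicit Defensive.

(* A finite multigraph (parallel edges allowed) on the vertex type V is given
   by its edge-multiplicity function  mult : V -> V -> nat ;
   mult x y = number of edges joining x and y (symmetric; mult x x = loops). *)

Definition Z3_mult (x y : bool) : nat := if x != y then 3 else 0.

(* G(e) for an edge e with ends u1, u2: remove one copy of e, add a new vertex
   w (= None), two parallel edges w u1 and two parallel edges w u2. *)
Definition split_mult (V : finType) (m : V -> V -> nat) (u1 u2 : V)
  (x y : option V) : nat :=
  match x, y with
  | Some a, Some b =>
      m a b - (if ((a == u1) && (b == u2)) || ((a == u2) && (b == u1)) then 1 else 0)
  | None, Some b => 2 * (b == u1) + 2 * (b == u2)
  | Some a, None => 2 * (a == u1) + 2 * (a == u2)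
  | None, None => 0
  end.

(* Theta: smallest class containing Z_3 and closed under G |-> G(e);
   graphs are considered up to isomorphism (relabelling of vertices). *)
Inductive Theta : forall V : finType, (V -> V -> nat) -> Prop :=
  | Theta_Z3 : Theta Z3_mult
  | Theta_split (V : finType) (m : V -> V -> nat) (u1 u2 : V) :
      Theta m -> 0 < m u1 u2 -> Theta (split_mult m u1 u2)
  | Theta_iso (V W : finType) (m : V -> V -> nat) (m' : W -> W -> nat)
      (f : W -> V) :
      Theta m -> bijective f -> (forall x y, m' x y = m (f x) (f y)) ->
      Theta m'.

(* degree: number of edge-ends at x (a loop counts twice) *)
Definition deg (V : finType) (m : V -> V -> nat) (x : V) : nat :=
  \sum_(y : V) m x y + m x x.

Definition nbhd (V : finType) (m : V -> V -> nat) (x : V) : {set V} :=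
  [set u | 0 < m x u].

Definition adjacent (V : finType) (m : V -> V -> nat) (x y : V) : bool :=
  0 < m x y.

Definition Gamma (V : finType) (m : V -> V -> nat) : {set V} :=
  [set x | (deg m x == 4) && (#|nbhd m x| == 2)].

Definition min_degree_is (V : finType) (m : V -> V -> nat) (k : nat) : Prop :=
  (exists x : V, deg m x = k) /\ (forall x : V, k <= deg m x).

(* Main.v *)
Require Import Defs.
From mathcomp Require Import all_boot.
From mathcomp Require Import zify.
Set Implicit Arguments. Unset Strict Implicit. Unset Printing Implicit Defensive.

Lemma sum_opt (V : finType) (F : option V -> nat) :
  \sum_(y : option V) F y = F None + \sum_(x : V) F (Some x).
Proof.
rewrite (bigD1 None) //=; congr (_ + _).
rewrite (reindex_omap Some id) //=.
- by apply: eq_bigl => x; rewrite eqxx.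
- by case.
Qed.

Lemma sum_eq1 (V : finType) (u : V) : \sum_(x : V) (x == u : nat) = 1.
Proof. by rewrite (bigD1 u) //= eqxx big1 // => x /negbTE ->. Qed.

Record Inv (V : finType) (m : V -> V -> nat) : Prop := {
  Isym : forall x y, m x y = m y x;
  Iloop : forall x, m x x = 0;
  I2 : #|V| = 2 -> (forall x y, x != y -> m x y = 3) /\ (forall x, deg m x = 3);
  Imin : 3 <= #|V| -> min_degree_is m 4;
  I5 : 3 <= #|V| -> forall u v, 0 < m u v ->
         exists x, [/\ x \in Gamma m, x != u & x != v];
  I6 : 4 <= #|V| ->
     exists x y : V, [/\ x \in Gamma m, y \in Gamma m, x != y & ~~ adjacent m x y]
}.

Section Split.
Variables (V : finType) (m : V -> V -> nat) (u1 u2 : V).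
Hypothesis msym : forall x y, m x y = m y x.
Hypothesis mloop : forall x, m x x = 0.
Hypothesis mu : 0 < m u1 u2.
Local Notation m' := (split_mult m u1 u2).

Lemma u12 : u1 != u2.
Proof. by apply/eqP => E; move: mu; rewrite E mloop. Qed.

Lemma split_sym x y : m' x y = m' y x.
Proof.
case: x => [a|]; case: y => [b|] //=; rewrite msym.
by case: (a == u1); case: (a == u2); case: (b == u1); case: (b == u2).
Qed.

Lemma split_loop x : m' x x = 0.
Proof. by case: x => [a|] //=; rewrite mloop. Qed.

Lemma split_deg_None : deg m' None = 4.
Proof.
rewrite /deg sum_opt /= big_split /= -!big_distrr /= !sum_eq1.
by [].
Qed.

Lemma split_deg_Some a : deg m' (Some a) = deg m a + (a == u1) + (a == u2).
Proof.
rewrite /deg sum_opt /= !mloop sub0n !addn0.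
set ind := fun x : V => if ((a == u1) && (x == u2)) || ((a == u2) && (x == u1)) then 1 else 0.
have Hle : forall x, ind x <= m a x.
  move=> x; rewrite /ind; case: ifP => //.
  case/orP => /andP[/eqP-> /eqP->] //; by rewrite msym.
have Hind : \sum_x ind x = (a == u1) + (a == u2).
  rewrite /ind; case: (a =P u1) => [->|/eqP n1].
    by rewrite (negbTE u12) /= (bigD1 u2) //= eqxx big1 // => x /negbTE ->.
  case: (a =P u2) => [_|_] /=.
    by rewrite (bigD1 u1) //= eqxx big1 // => x /negbTE ->.
  by rewrite big1.
rewrite sumnB; last by move=> x _; apply: Hle.
have Hs : \sum_x ind x <= \sum_x m a x by apply: leq_sum.
move: Hs; rewrite Hind; lia.
Qed.

Lemma split_nbhd_None : nbhd m' None = [set Some u1; Some u2].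
Proof.
apply/setP => -[x|]; rewrite !inE //=.
by rewrite !(inj_eq (@Some_inj _)); case: (x == u1); case: (x == u2).
Qed.

Lemma split_Gamma_None : None \in Gamma m'.
Proof.
by rewrite inE split_deg_None split_nbhd_None cards2 /= u12.
Qed.

Lemma split_Gamma_Some a : a != u1 -> a != u2 -> (Some a \in Gamma m') = (a \in Gamma m).
Proof.
move=> n1 n2; rewrite !inE split_deg_Some (negbTE n1) (negbTE n2) !addn0.
have -> : nbhd m' (Some a) = Some @: nbhd m a.
  apply/setP => -[b|]; rewrite inE /=.
    by rewrite (negbTE n1) (negbTE n2) /= subn0 (mem_imset _ _ (@Some_inj _)) inE.
  rewrite (negbTE n1) (negbTE n2) /=.
  by apply/esym/imsetP => -[].
by rewrite card_imset //; apply: Some_inj.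
Qed.

Lemma split_nonadj a : a != u1 -> a != u2 -> ~~ adjacent m' (Some a) None.
Proof. by move=> n1 n2; rewrite /adjacent /= (negbTE n1) (negbTE n2). Qed.

Lemma two_all : #|V| = 2 -> forall x, (x == u1) || (x == u2).
Proof.
move=> c2 x.
have : [set u1; u2] == setT.
  by rewrite eqEcard subsetT cardsT c2 cards2 u12.
by move/eqP => E; move: (in_setT x); rewrite -E !inE.
Qed.

Hypothesis c2 : #|V| = 2.
Hypothesis m3 : m u1 u2 = 3.
Hypothesis d3 : forall x, deg m x = 3.

Lemma two_Gamma x : x \in Gamma m'.
Proof.
have hall := two_all c2.
have n21 : u2 != u1 by rewrite eq_sym u12.
case: x => [a|]; last exact: split_Gamma_None.
case/orP: (hall a) => /eqP ->.
- rewrite inE split_deg_Some d3 eqxx (negbTE u12) /=.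
  have -> : nbhd m' (Some u1) = [set None; Some u2].
    apply/setP => -[b|]; rewrite !inE /=; last by rewrite eqxx.
    case/orP: (hall b) => /eqP ->; rewrite !eqxx ?(negbTE u12) ?(negbTE n21) /=.
      by rewrite mloop (inj_eq (@Some_inj _)) (negbTE u12).
    by rewrite m3.
  by rewrite cards2.
- rewrite inE split_deg_Some d3 eqxx (negbTE n21) /=.
  have -> : nbhd m' (Some u2) = [set None; Some u1].
    apply/setP => -[b|]; rewrite !inE /=; last by rewrite ?eqxx ?(negbTE n21) ?(negbTE u12).
    case/orP: (hall b) => /eqP ->; rewrite !eqxx ?(negbTE u12) ?(negbTE n21) /=.
      by rewrite msym m3.
    by rewrite mloop (inj_eq (@Some_inj _)) (negbTE n21).
  by rewrite cards2.
Qed.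

End Split.

Section Iso.
Variables (V W : finType) (m : V -> V -> nat) (m' : W -> W -> nat) (f : W -> V).
Hypothesis fbij : bijective f.
Hypothesis E : forall x y, m' x y = m (f x) (f y).

Lemma iso_deg x : deg m' x = deg m (f x).
Proof.
rewrite /deg E; congr (_ + _).
rewrite [in RHS](reindex f); last exact: onW_bij.
by apply: eq_bigr => y _; rewrite E.
Qed.

Lemma iso_Gamma x : (x \in Gamma m') = (f x \in Gamma m).
Proof.
case: fbij => g fg gf.
rewrite !inE iso_deg.
have -> : #|nbhd m' x| = #|nbhd m (f x)|.
  rewrite -(card_imset _ (can_inj fg)) (can2_imset_pre _ fg gf).
  apply: eq_card => z; rewrite !inE E gf //.
by [].
Qed.
End Iso.

Lemma Inv_Theta (V : finType) (m : V -> V -> nat) : Theta m -> Inv m.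
Proof.
elim => {V m}.
- split.
  + by case; case.
  + by case.
  + move=> _; split; first by case; case.
    by case; rewrite /deg big_bool.
  + by rewrite card_bool.
  + by rewrite card_bool.
  + by rewrite card_bool.
- move=> V m u1 u2 _ [msym mloop H2 Hmin H5 H6] mu.
  have u12' := u12 mloop mu.
  have cV : 2 <= #|V| by move: (max_card [set u1; u2]); rewrite cards2 u12'.
  have cO : #|{: option V}| = #|V|.+1 by rewrite card_option.
  split.
  + exact: split_sym.
  + exact: split_loop.
  + by rewrite cO => -[] c; rewrite c in cV.
  + rewrite cO => _; split; first by exists None; rewrite split_deg_None.
    case=> [a|]; last by rewrite split_deg_None.
    rewrite split_deg_Some //.
    have [c2|c3] : #|V| = 2 \/ 3 <= #|V| by lia.
      case: (H2 c2) => _ d3; rewrite d3.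
      by case/orP: (two_all mloop mu c2 a) => ->; rewrite ?addn0 ?addn1.
    by case: (Hmin c3) => _ /(_ a); lia.
  + rewrite cO => _ u v huv.
    have [c2|c3] : #|V| = 2 \/ 3 <= #|V| by lia.
      case: (H2 c2) => m3' d3.
      have m3 : m u1 u2 = 3 by apply: m3'.
      have : ~~ ([set: option V] \subset [set u; v]).
        apply/negP => /subset_leq_card; rewrite cardsT cO c2 cards2.
        by case: (u != v).
      case/subsetPn => x _; rewrite !inE negb_or => /andP[xu xv].
      by exists x; split => //; apply: two_Gamma.
    have [x [xG x1 x2]] := H5 c3 u1 u2 mu.
    move: huv; case: u => [a|]; case: v => [b|] //= huv.
    * by exists None; split => //; apply: split_Gamma_None.
    * exists (Some x); split => //; first by rewrite split_Gamma_Some.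
      rewrite inj_eq; last exact: Some_inj.
      by apply/eqP => xa; subst a; move: huv; rewrite (negbTE x1) (negbTE x2).
    * exists (Some x); split => //; first by rewrite split_Gamma_Some.
      rewrite inj_eq; last exact: Some_inj.
      by apply/eqP => xa; subst b; move: huv; rewrite (negbTE x1) (negbTE x2).
  + rewrite cO => c4.
    have [x [xG x1 x2]] := H5 (c4 : 2 < #|V|) u1 u2 mu.
    exists (Some x), None; split => //.
    * by rewrite split_Gamma_Some.
    * exact: split_Gamma_None.
    * exact: split_nonadj.
- move=> V W m m' f _ [msym mloop H2 Hmin H5 H6] fbij E.
  have cW : #|W| = #|V| by exact: (bij_eq_card fbij).
  case: (fbij) => g fg gf.
  split.
  + by move=> x y; rewrite !E msym.
  + by move=> x; rewrite E mloop.
  + rewrite cW => c2; case: (H2 c2) => h1 h2; split.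
      by move=> x y xy; rewrite E h1 // (inj_eq (can_inj fg)).
    by move=> x; rewrite (iso_deg fbij E) h2.
  + rewrite cW => c3; case: (Hmin c3) => [[x dx] hx]; split.
      by exists (g x); rewrite (iso_deg fbij E) gf.
    by move=> z; rewrite (iso_deg fbij E).
  + rewrite cW => c3 u v huv.
    have huv' : 0 < m (f u) (f v) by rewrite -E.
    have [x [xG xu xv]] := H5 c3 (f u) (f v) huv'.
    exists (g x); split.
    * by rewrite (iso_Gamma fbij E) gf.
    * by apply/eqP => gx; move: xu; rewrite -gx gf eqxx.
    * by apply/eqP => gx; move: xv; rewrite -gx gf eqxx.
  + rewrite cW => c4; have [x [y [xG yG xy nadj]]] := H6 c4.
    exists (g x), (g y); split.
    * by rewrite (iso_Gamma fbij E) gf.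
    * by rewrite (iso_Gamma fbij E) gf.
    * by rewrite (can_eq gf).
    * by rewrite /adjacent E !gf.
Qed.

Theorem lemma4p5 (V : finType) (m : V -> V -> nat) :
  Theta m ->
  (3 <= #|V| -> min_degree_is m 4) /\
  (4 <= #|V| ->
     exists x y : V, [/\ x \in Gamma m, y \in Gamma m, x != y & ~~ adjacent m x y]).
Proof. by move=> /Inv_Theta [_ _ _ Hmin _ H6]; split. Qed.
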